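(* Let $n,N\ge1$, $\sigma^2>0$, $B_j>0$ ($j\in[N]$), $g_{ij}>0$ and $t_i>0$ ($i\in[n],j\in[N]$). Let $\tilde\gamma>0$ and a partition $0=\gamma_1<\gamma_2<\dots<\gamma_m<\gamma_{m+1}=\tilde\gamma$ be given. Set $b_1=1$, $a_1=\log_2(1+\gamma_2)/\gamma_2$, and for $\ell=2,\dots,m$ $$b_\ell=\frac{\log(\log_2(1+\gamma_{\ell+1}))-\log(\log_2(1+\gamma_\ell))}{\log\gamma_{\ell+1}-\log\gamma_\ell},\qquad a_\ell=e^{\log(\log_2(1+\gamma_{\ell+1}))-b_\ell\log\gamma_{\ell+1}},$$ and $\varphi_\ell(\gamma)=a_\ell\gamma^{b_\ell}$. For $q\in\mathbb{R}^N$ and $u\in\mathbb{R}^{n\times N}$ define, for $\ell\in[m]$, $$\hat f_\ell(q_j,u_{ij})=\log\Big(\frac{\sigma^2}{g_{ij}}e^{-q_j-\frac{u_{ij}}{b_\ell}}+\sum_{k\neq j}\frac{g_{ik}}{g_{ij}}e^{q_k-q_j-\frac{u_{ij}}{b_\ell}}\Big).$$ Put $P_j=e^{q_j}$, $x_{ij}=e^{u_{ij}}$ and $S_{ij}=\frac{P_jg_{ij}}{\sigma^2+\sum_{k\ne j}P_kg_{ik}}$. Then: (i) each $\hat f_\ell$ is a convex function of $(q,u)$; (ii) let $M>0$ and let $\bar z\in\{0,1\}^{n\times N}$ with $\sum_{j=1}^N\bar z_{ij}=N-1$ for all $i$, and $z_{ij}=1-\bar z_{ij}$. Assume $S_{ij}\le\tilde\gamma$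 for all $i,j$. If $$\hat f_\ell(q_j,u_{ij})\le\frac{\log\big(\frac{B_ja_\ell}{t_i}\big)}{b_\ell}+M\bar z_{ij}\quad\text{for all }\ell\in[m],\ i\in[n],\ j\in[N],$$ then $\sum_{j=1}^N x_{ij}B_j\log_2(1+S_{ij})\,z_{ij}\ge t_i$ for all $i\in[n]$; (iii) the conservatism of this approximation vanishes as $m\to\infty$: for any sequence of such partitions of $[0,\tilde\gamma]$ whose maximal subinterval length tends to $0$, $\sup_{\gamma\in[0,\tilde\gamma]}\big(\log_2(1+\gamma)-\min_{\ell\in[m]}\varphi_\ell(\gamma)\big)\to0$.
   Context: $\log$ is the natural logarithm; $[n]=\{1,\dots,n\}$. $P_j$ is the per-resource-block transmit power of base station $j$, $x_{ij}$ the fraction of base station $j$'s bandwidth given to user $i$, $z_{ij}=1$ iff user $i$ is associated with base station $j$, $t_i$ the throughput requirement of user $i$, and $\tilde\gamma$ an upper bound on the SINR. *)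

(* Defs.v *)
From HB Require Import structures.
From mathcomp Require Import all_boot all_order all_algebra.
From mathcomp Require Import all_classical all_reals all_analysis.
Set Implicit Arguments. Unset Strict Implicit. Unset Printing Implicit Defensive.
Import Order.TTheory GRing.Theory Num.Theory.
Import numFieldNormedType.Exports.
Local Open Scope ring_scope.

Section Defs.
Variable R : realType.

Definition log2 (x : R) : R := ln x / ln 2.

Definition is_partition (gt : R) (m : nat) (gam : nat -> R) : Prop :=
  gam 1%N = 0 /\ (forall l, (1 <= l <= m)%N -> gam l < gam l.+1) /\ gam m.+1 = gt.

Definition mesh (m : nat) (gam : nat -> R) : R :=
  \big[Num.max/0]_(1 <= l < m.+1) (gam l.+1 - gam l).

Definition bcoef (gam : nat -> R) (l : nat) : R :=
  if l == 1%N then 1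
  else (ln (log2 (1 + gam l.+1)) - ln (log2 (1 + gam l)))
         / (ln (gam l.+1) - ln (gam l)).

Definition acoef (gam : nat -> R) (l : nat) : R :=
  if l == 1%N then log2 (1 + gam 2%N) / gam 2%N
  else expR (ln (log2 (1 + gam l.+1)) - bcoef gam l * ln (gam l.+1)).

Definition phi (gam : nat -> R) (l : nat) (x : R) : R :=
  acoef gam l * x `^ bcoef gam l.

Definition minphi (m : nat) (gam : nat -> R) (x : R) : R :=
  \big[Num.min/phi gam 1 x]_(1 <= l < m.+1) phi gam l x.

Variables (n N : nat).

Definition fhat (sigma2 : R) (g : 'I_n -> 'I_N -> R) (gam : nat -> R) (l : nat)
  (i : 'I_n) (j : 'I_N) (q : 'I_N -> R) (u : 'I_n -> 'I_N -> R) : R :=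
  ln (sigma2 / g i j * expR (- q j - u i j / bcoef gam l)
      + \sum_(k < N | k != j) g i k / g i j * expR (q k - q j - u i j / bcoef gam l)).

Definition SINR (sigma2 : R) (g : 'I_n -> 'I_N -> R) (q : 'I_N -> R)
  (i : 'I_n) (j : 'I_N) : R :=
  expR (q j) * g i j / (sigma2 + \sum_(k < N | k != j) expR (q k) * g i k).

Definition convex_qu (f : ('I_N -> R) -> ('I_n -> 'I_N -> R) -> R) : Prop :=
  forall (q1 q2 : 'I_N -> R) (u1 u2 : 'I_n -> 'I_N -> R) (t : R),
    0 <= t <= 1 ->
    f (fun k => t * q1 k + (1 - t) * q2 k)
      (fun i k => t * u1 i k + (1 - t) * u2 i k)
    <= t * f q1 u1 + (1 - t) * f q2 u2.

End Defs.

(* Main.v *)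
Require Import Defs.
From HB Require Import structures.
From mathcomp Require Import all_boot all_order all_algebra.
From mathcomp Require Import all_classical all_reals all_analysis.
From mathcomp Require Import ring lra zify.
Import Order.TTheory GRing.Theory Num.Theory.
Import numFieldNormedType.Exports.
Local Open Scope classical_set_scope.
Local Open Scope ring_scope.

Section Aux.
Variable R : realType.

Lemma expR_conv (t a b : R) : 0 <= t <= 1 ->
  expR (t * a + (1 - t) * b) <= t * expR a + (1 - t) * expR b.
Proof.
move=> /andP[t0 t1].
pose m := t * a + (1 - t) * b.
have ea : expR a = expR m * expR (a - m) by rewrite -expRD addrC subrK.
have eb : expR b = expR m * expR (b - m) by rewrite -expRD addrC subrK.
rewrite ea eb.
have h1 := expR_ge1Dx (a - m); have h2 := expR_ge1Dx (b - m).
have em := expR_gt0 m.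
apply: (@le_trans _ _ (t * (expR m * (1 + (a - m))) + (1 - t) * (expR m * (1 + (b - m))))).
  have -> : t * (expR m * (1 + (a - m))) + (1 - t) * (expR m * (1 + (b - m)))
     = expR m * (1 + (t * a + (1 - t) * b) - m) by ring.
  by rewrite -/m addrK mulr1.
apply: lerD; apply: ler_wpM2l; rewrite ?subr_ge0 //; apply: ler_wpM2l => //; exact: ltW.
Qed.

Lemma lse_conv (I : finType) (P : pred I) (c0 : R) (c : I -> R) (a0 b0 : R)
  (a b : I -> R) (t : R) :
  0 < c0 -> (forall k, 0 < c k) -> 0 <= t <= 1 ->
  ln (c0 * expR (t * a0 + (1 - t) * b0)
      + \sum_(k | P k) c k * expR (t * a k + (1 - t) * b k))
  <= t * ln (c0 * expR a0 + \sum_(k | P k) c k * expR (a k))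
     + (1 - t) * ln (c0 * expR b0 + \sum_(k | P k) c k * expR (b k)).
Proof.
move=> c00 c_0 ht.
have pos x (f : I -> R) : 0 < c0 * expR x + \sum_(k | P k) c k * expR (f k).
  have : 0 <= \sum_(k | P k) c k * expR (f k).
    by apply: sumr_ge0 => k _; apply/ltW/mulr_gt0 => //; exact: expR_gt0.
  have := mulr_gt0 c00 (expR_gt0 x); lra.
set A := c0 * expR a0 + _.
set B := c0 * expR b0 + _.
set S := c0 * expR _ + _.
have A0 : 0 < A by exact: pos.
have B0 : 0 < B by exact: pos.
have S0 : 0 < S by exact: pos.
set L := t * ln A + (1 - t) * ln B.
have term x y : expR (t * x + (1 - t) * y) * expR (- L)
    <= t * (expR x / A) + (1 - t) * (expR y / B).
  rewrite -expRD.
  have -> : t * x + (1 - t) * y + - L = t * (x - ln A) + (1 - t) * (y - ln B) by rewrite /L; ring.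
  apply: le_trans (expR_conv _ _ _ ht) _.
  by rewrite !expRD !expRN !lnK ?posrE.
have key : S * expR (- L) <= 1.
  rewrite /S mulrDl mulr_suml -mulrA.
  have ht0 : 0 <= t by case/andP: ht.
  have ht1 : 0 <= 1 - t by case/andP: ht; rewrite subr_ge0.
  apply: le_trans.
    apply: lerD; first by apply: ler_wpM2l; [exact: ltW | exact: term].
    apply: ler_sum => k _; rewrite -mulrA; by apply: ler_wpM2l; [exact: ltW | exact: term].
  have -> : \sum_(k | P k) c k * (t * (expR (a k) / A) + (1 - t) * (expR (b k) / B))
     = t / A * \sum_(k | P k) c k * expR (a k) + (1 - t) / B * \sum_(k | P k) c k * expR (b k).
    rewrite !mulr_sumr -big_split; apply: eq_bigr => k _ /=; ring.
  have -> : c0 * (t * (expR a0 / A) + (1 - t) * (expR b0 / B)) +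
     (t / A * \sum_(k | P k) c k * expR (a k) + (1 - t) / B * \sum_(k | P k) c k * expR (b k))
     = t * (A / A) + (1 - t) * (B / B) by rewrite /A /B; ring.
  by rewrite !mulfV ?gt_eqF // !mulr1 addrC subrK.
have SL : S <= expR L.
  have -> : S = S * expR (- L) * expR L by rewrite -mulrA -expRD addNr expR0 mulr1.
  by rewrite -[leRHS]mul1r ler_wpM2r // ltW // expR_gt0.
by rewrite -[leRHS]expRK ler_ln ?posrE ?expR_gt0.
Qed.

Definition hh (s : R) : R := ln (ln (1 + expR s)).
Definition dh (s : R) : R := (ln (1 + expR s))^-1 * ((1 + expR s)^-1 * expR s).

Lemma onepexp_gt1 s : 1 < 1 + expR s :> R.
Proof. by rewrite ltrDl expR_gt0. Qed.

Lemma hh_derive (s : R) : is_derive s 1 hh (dh s).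
Proof.
have d1 : is_derive s 1 (fun s : R => 1 + expR s) (expR s).
  have := is_deriveD (is_derive_cst (1:R) s 1) (is_derive_expR s).
  by rewrite add0r.
have p1 : 0 < 1 + expR s by apply: lt_trans (onepexp_gt1 s).
have d2 : is_derive s 1 (fun s : R => ln (1 + expR s)) ((1 + expR s)^-1 * expR s).
  have := @is_derive1_comp R (@ln R) (fun s : R => 1 + expR s) s _ _ (is_derive1_ln p1) d1. exact.
have p2 : 0 < ln (1 + expR s) by apply: ln_gt0; exact: onepexp_gt1.
have := @is_derive1_comp R (@ln R) (fun s : R => ln (1 + expR s)) s _ _ (is_derive1_ln p2) d2. exact.
Qed.

Lemma hh_MVT a b : a < b -> exists2 c, c \in `]a, b[ & hh b - hh a = dh c * (b - a).
Proof.
move=> ab; apply: MVT => //; first by move=> x _; exact: hh_derive.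
apply/continuous_subspaceT => r.
apply/differentiable_continuous/derivable1_diffP.
by case: (hh_derive r).
Qed.

Lemma claimC (y1 y2 : R) : 0 < y1 -> y1 <= y2 ->
  y2 * (1 + y1) * ln (1 + y1) <= y1 * (1 + y2) * ln (1 + y2).
Proof.
move=> y10 y12.
have y20 : 0 < y2 by apply: lt_le_trans y12.
pose lam := y1 * (1 + y2) / (y2 * (1 + y1)).
have lam0 : 0 <= lam by rewrite /lam divr_ge0 // ?mulr_ge0 //; lra.
have lam1 : lam <= 1.
  rewrite /lam ler_pdivrMr ?mul1r; last by apply: mulr_gt0 => //; lra.
  nra.
have hl : 0 <= lam <= 1 by rewrite lam0 lam1.
have := expR_conv lam (ln ((1 + y2)^-1)) 0 hl.
rewrite lnK ?posrE ?invr_gt0; last lra.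
rewrite mulr0 addr0 expR0 mulr1.
have -> : lam * (1 + y2)^-1 + (1 - lam) = (1 + y1)^-1.
  rewrite /lam; field; do ?[apply/andP; split]; apply/eqP; lra.
rewrite -ler_ln ?posrE ?expR_gt0 ?invr_gt0; last lra.
rewrite expRK !lnV ?posrE //; try lra.
move=> H.
have E : y1 * (1 + y2) = y2 * (1 + y1) * lam.
  rewrite /lam; field; do ?[apply/andP; split]; apply/eqP; lra.
rewrite E -[in leRHS]mulrA; apply: ler_wpM2l; first by apply: mulr_ge0; lra.
lra. by [].
Qed.

Lemma dh_decr s s' : s <= s' -> dh s' <= dh s.
Proof.
move=> ss'.
have y1 := expR_gt0 s; have y2 := expR_gt0 s'.
have y12 : expR s <= expR s' by rewrite ler_expR.
have L1 : 0 < ln (1 + expR s) by apply: ln_gt0; exact: onepexp_gt1.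
have L2 : 0 < ln (1 + expR s') by apply: ln_gt0; exact: onepexp_gt1.
have C := claimC (expR s) (expR s') y1 y12.
rewrite -subr_ge0.
have -> : dh s - dh s' = (expR s * (1 + expR s') * ln (1 + expR s')
      - expR s' * (1 + expR s) * ln (1 + expR s)) /
      ((1 + expR s) * ln (1 + expR s) * ((1 + expR s') * ln (1 + expR s'))).
  rewrite /dh; field.
  do ?[apply/andP; split]; apply/eqP; lra.
apply: divr_ge0; first lra.
apply: mulr_ge0; apply: mulr_ge0; lra.
Qed.

Lemma hh_conc s1 s s2 : s1 < s -> s < s2 ->
  (hh s2 - hh s) * (s - s1) <= (hh s - hh s1) * (s2 - s).
Proof.
move=> h1 h2.
have [c1 /andP[c1a c1b] E1] := hh_MVT _ _ h1.
have [c2 /andP[c2a c2b] E2] := hh_MVT _ _ h2.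
rewrite E1 E2.
have : dh c2 <= dh c1 by apply: dh_decr; apply: ltW; apply: lt_trans c2a.
move=> D.
have -> : dh c2 * (s2 - s) * (s - s1) = ((s2 - s) * (s - s1)) * dh c2 by ring.
have -> : dh c1 * (s - s1) * (s2 - s) = ((s2 - s) * (s - s1)) * dh c1 by ring.
apply: ler_wpM2l => //; apply: mulr_ge0; lra.
Qed.

Definition HH (s : R) : R := ln (log2 (1 + expR s)).

Lemma ln2_gt0 : 0 < ln (2 : R).
Proof. by apply: ln_gt0; rewrite ltr1n. Qed.

Lemma HH_hh s : HH s = hh s - ln (ln (2 : R)).
Proof.
have p2 : 0 < ln (1 + expR s) by apply: ln_gt0; exact: onepexp_gt1.
rewrite /HH /hh /log2 lnM ?posrE ?invr_gt0 ?ln2_gt0 // lnV ?posrE ?ln2_gt0 //.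
Qed.

Lemma HH_conc s1 s s2 : s1 < s -> s < s2 ->
  (HH s2 - HH s) * (s - s1) <= (HH s - HH s1) * (s2 - s).
Proof.
move=> h1 h2; rewrite !HH_hh.
have -> : hh s2 - ln (ln 2) - (hh s - ln (ln 2)) = hh s2 - hh s by ring.
have -> : hh s - ln (ln 2) - (hh s1 - ln (ln 2)) = hh s - hh s1 by ring.
exact: hh_conc.
Qed.

Lemma dh_gt0 s : 0 < dh s.
Proof.
have p2 : 0 < ln (1 + expR s) by apply: ln_gt0; exact: onepexp_gt1.
have p1 : 0 < 1 + expR s by apply: lt_trans (onepexp_gt1 s).
by rewrite /dh !mulr_gt0 ?invr_gt0 ?expR_gt0.
Qed.

Lemma HH_incr s1 s2 : s1 < s2 -> HH s1 < HH s2.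
Proof.
move=> h; rewrite !HH_hh ltrD2r -subr_gt0.
have [c _ ->] := hh_MVT _ _ h.
by rewrite mulr_gt0 ?dh_gt0 // subr_gt0.
Qed.

Lemma chord_in s1 s2 s : s1 < s2 -> s1 <= s <= s2 ->
  HH s2 + (HH s2 - HH s1) / (s2 - s1) * (s - s2) <= HH s.
Proof.
move=> h12 /andP[h1 h2].
set b := (HH s2 - HH s1) / (s2 - s1).
have hb : b * (s2 - s1) = HH s2 - HH s1 by rewrite /b divfK // subr_eq0 gt_eqF.
have [e1|l1] := eqVneq s s1.
  rewrite e1; nra.
have [e2|l2] := eqVneq s s2.
  by rewrite e2 subrr mulr0 addr0.
have l1' : s1 < s by rewrite lt_neqAle eq_sym l1 h1.
have l2' : s < s2 by rewrite lt_neqAle l2 h2.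
have C := HH_conc _ _ _ l1' l2'.
have D : 0 < s2 - s1 by rewrite subr_gt0.
rewrite -(ler_pM2r D).
nra.
Qed.

Lemma chord_outL s1 s2 s : s1 < s2 -> s <= s1 ->
  HH s <= HH s2 + (HH s2 - HH s1) / (s2 - s1) * (s - s2).
Proof.
move=> h12 h1.
set b := (HH s2 - HH s1) / (s2 - s1).
have hb : b * (s2 - s1) = HH s2 - HH s1 by rewrite /b divfK // subr_eq0 gt_eqF.
have [e1|l1] := eqVneq s s1.
  rewrite e1; nra.
have l1' : s < s1 by rewrite lt_neqAle l1 h1.
have C := HH_conc _ _ _ l1' h12.
have D : 0 < s2 - s1 by rewrite subr_gt0.
rewrite -(ler_pM2r D).
nra.
Qed.

Lemma chord_outR s1 s2 s : s1 < s2 -> s2 <= s ->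
  HH s <= HH s2 + (HH s2 - HH s1) / (s2 - s1) * (s - s2).
Proof.
move=> h12 h2.
set b := (HH s2 - HH s1) / (s2 - s1).
have hb : b * (s2 - s1) = HH s2 - HH s1 by rewrite /b divfK // subr_eq0 gt_eqF.
have [e2|l2] := eqVneq s s2.
  by rewrite e2 subrr mulr0 addr0.
have l2' : s2 < s by rewrite lt_neqAle eq_sym l2 h2.
have C := HH_conc _ _ _ h12 l2'.
have D : 0 < s2 - s1 by rewrite subr_gt0.
rewrite -(ler_pM2r D).
nra.
Qed.

Lemma log2_gt0 x : 0 < x -> 0 < log2 (1 + x) :> R.
Proof. by move=> x0; rewrite /log2 divr_gt0 ?ln2_gt0 // ln_gt0 // ltrDl. Qed.

Lemma log2_H x : 0 < x -> log2 (1 + x) = expR (HH (ln x)) :> R.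
Proof. by move=> x0; rewrite /HH [expR (ln x)]lnK ?posrE // lnK // posrE log2_gt0. Qed.

Lemma ln_log2 x : 0 < x -> ln (log2 (1 + x)) = HH (ln x) :> R.
Proof. by move=> x0; rewrite /HH lnK. Qed.

Lemma log2_1 : log2 (1 + 0) = 0 :> R.
Proof. by rewrite addr0 /log2 ln1 mul0r. Qed.

Section PhiL.
Variables (gam : nat -> R) (l : nat).
Hypotheses (hl : l != 1%N) (g0 : 0 < gam l) (g01 : gam l < gam l.+1).

Let s1 := ln (gam l).
Let s2 := ln (gam l.+1).
Let g1 : 0 < gam l.+1. Proof. exact: lt_trans g01. Qed.
Let s12 : s1 < s2. Proof. by rewrite /s1 /s2 ltr_ln ?posrE. Qed.

Lemma bcoef_repr : bcoef gam l = (HH s2 - HH s1) / (s2 - s1).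
Proof. by rewrite /bcoef (negbTE hl) !ln_log2. Qed.

Lemma bcoef_gt0 : 0 < bcoef gam l.
Proof. by rewrite bcoef_repr divr_gt0 // subr_gt0 //; exact: HH_incr. Qed.

Lemma acoef_gt0 : 0 < acoef gam l.
Proof. by rewrite /acoef (negbTE hl) expR_gt0. Qed.

Lemma phi_repr x : 0 < x ->
  phi gam l x = expR (HH s2 + bcoef gam l * (ln x - s2)).
Proof.
move=> x0; rewrite /phi /acoef (negbTE hl) /powR gt_eqF // -expRD.
by congr expR; rewrite ln_log2 // /s2; ring.
Qed.

Lemma phi_le_in x : gam l <= x <= gam l.+1 -> phi gam l x <= log2 (1 + x).
Proof.
move=> /andP[h1 h2]; have x0 : 0 < x by apply: lt_le_trans h1.
rewrite phi_repr // log2_H // ler_expR bcoef_repr.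
apply: chord_in => //.
by rewrite /s1 /s2 !ler_ln ?posrE // h1 h2.
Qed.

Lemma phi_ge_out x : 0 < x -> x <= gam l \/ gam l.+1 <= x -> log2 (1 + x) <= phi gam l x.
Proof.
move=> x0 [h|h]; rewrite phi_repr // log2_H // ler_expR bcoef_repr.
  by apply: chord_outL => //; rewrite /s1 ler_ln ?posrE.
by apply: chord_outR => //; rewrite /s2 ler_ln ?posrE.
Qed.

Lemma phi_ge_left x : gam l <= x -> log2 (1 + gam l) <= phi gam l x.
Proof.
move=> h1; have x0 : 0 < x by apply: lt_le_trans h1.
rewrite phi_repr // log2_H // ler_expR.
have hs : s1 <= ln x by rewrite /s1 ler_ln ?posrE.
have bp := bcoef_gt0.
have hb : bcoef gam l * (s2 - s1) = HH s2 - HH s1.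
  by rewrite bcoef_repr divfK // subr_eq0 gt_eqF.
rewrite -/s1; nra.
Qed.

Lemma phi_ge0 x : 0 <= phi gam l x.
Proof. by rewrite /phi mulr_ge0 ?powR_ge0 // ltW // acoef_gt0. Qed.

End PhiL.

Lemma lnratio (x y : R) : 0 < x -> x <= y -> x * ln (1 + y) <= y * ln (1 + x).
Proof.
move=> x0 xy; have y0 : 0 < y by apply: lt_le_trans xy.
pose lam := x / y.
have hl : 0 <= lam <= 1.
  apply/andP; split; [apply: divr_ge0; exact: ltW | by rewrite /lam ler_pdivrMr // mul1r].
have := expR_conv lam (ln (1 + y)) 0 hl.
rewrite lnK ?posrE; last lra.
rewrite mulr0 addr0 expR0 mulr1.
have -> : lam * (1 + y) + (1 - lam) = 1 + x.
  rewrite /lam; field; apply/eqP; lra.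
rewrite -ler_ln ?posrE ?expR_gt0; last lra.
rewrite expRK => H.
have E : x = y * lam by rewrite /lam mulrC divfK // gt_eqF.
rewrite [in leLHS]E -mulrA; apply: ler_wpM2l; [exact: ltW | exact: H]. by [].
Qed.

Section Phi1.
Variables (gam : nat -> R).
Hypothesis (g2 : 0 < gam 2%N).

Lemma phi1E x : 0 <= x -> phi gam 1 x = log2 (1 + gam 2%N) / gam 2%N * x.
Proof. by move=> x0; rewrite /phi /acoef /bcoef /= powRr1. Qed.

Lemma acoef1_gt0 : 0 < acoef gam 1.
Proof. by rewrite /acoef /= divr_gt0 ?log2_gt0. Qed.

Lemma phi1_ge0 x : 0 <= x -> 0 <= phi gam 1 x.
Proof. by move=> x0; rewrite phi1E // mulr_ge0 // ltW // divr_gt0 ?log2_gt0. Qed.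

Lemma phi1_le x : 0 <= x <= gam 2%N -> phi gam 1 x <= log2 (1 + x).
Proof.
move=> /andP[h0 h2]; rewrite phi1E //.
have [->|xn0] := eqVneq x 0; first by rewrite mulr0 log2_1.
have x0 : 0 < x by rewrite lt_neqAle eq_sym xn0 h0.
have -> : log2 (1 + gam 2%N) / gam 2%N * x = x * ln (1 + gam 2%N) / gam 2%N / ln 2.
  by rewrite /log2; ring.
rewrite /log2 ler_pM2r ?invr_gt0 ?ln2_gt0 // ler_pdivrMr // [leRHS]mulrC.
exact: lnratio.
Qed.

Lemma phi1_ge x : gam 2%N <= x -> log2 (1 + x) <= phi gam 1 x.
Proof.
move=> h2; have x0 : 0 < x by apply: lt_le_trans h2.
rewrite phi1E; last exact: ltW.
have -> : log2 (1 + gam 2%N) / gam 2%N * x = x * ln (1 + gam 2%N) / gam 2%N / ln 2.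
  by rewrite /log2; ring.
rewrite /log2 ler_pM2r ?invr_gt0 ?ln2_gt0 // ler_pdivlMr // [leLHS]mulrC.
exact: lnratio.
Qed.

End Phi1.

Section Part.
Variables (gt : R) (m : nat) (gam : nat -> R).
Hypothesis hp : is_partition gt m gam.
Hypothesis hm : (1 <= m)%N.

Lemma part_le i j : (1 <= i)%N -> (i <= j)%N -> (j <= m.+1)%N -> gam i <= gam j.
Proof.
case: hp => [g1 [inc gm]].
elim: j => [|j IH] hi hij hj; first lia.
have [e|ne] := eqVneq i j.+1; first by rewrite e.
have hij' : (i <= j)%N by lia.
apply: le_trans (IH hi hij' ltac:(lia)) _.
apply: ltW; apply: inc; lia.
Qed.

Lemma part_pos l : (2 <= l)%N -> (l <= m.+1)%N -> 0 < gam l.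
Proof.
move=> h2 hl.
case: hp => [g1 [inc gm]].
have : gam 1%N < gam 2%N by apply: inc; lia.
rewrite g1 => g2; apply: lt_le_trans g2 _.
by apply: part_le; lia.
Qed.

Lemma part_inc l : (1 <= l <= m)%N -> gam l < gam l.+1.
Proof. by case: hp => [_ [inc _]]; exact: inc. Qed.

Lemma find_itv x : 0 <= x <= gt ->
  exists l, (1 <= l <= m)%N /\ gam l <= x <= gam l.+1.
Proof.
case: hp => [g1 [inc gm]] => /andP[x0 xgt].
suff H : forall d l, (m - l)%N = d -> (1 <= l <= m)%N -> gam l <= x ->
  exists l, (1 <= l <= m)%N /\ gam l <= x <= gam l.+1.
  by apply: (H (m - 1)%N 1%N) => //; rewrite ?g1 ?hm.
elim=> [|d IH] l hd hl hx.
  exists l; split => //; rewrite hx /=.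
  have -> : l = m by lia.
  by rewrite gm.
have [h|h] := lerP x (gam l.+1).
  by exists l; split => //; rewrite hx h.
apply: (IH l.+1); [lia | lia | exact: ltW].
Qed.

Lemma le_mesh l : (1 <= l <= m)%N -> gam l.+1 - gam l <= mesh m gam.
Proof.
move=> hl; rewrite /mesh -add1n.
have H : forall (F : nat -> R) d lo l, (lo <= l)%N -> (l < lo + d)%N ->
    F l <= \big[Num.max/0]_(lo <= i < lo + d) F i.
  move=> F; elim=> [|d IH] lo l' h1 h2; first lia.
  rewrite big_ltn; last lia.
  rewrite le_max; have [e|ne] := eqVneq l' lo; first by rewrite e lexx.
  by rewrite -addSnnS IH ?orbT //; lia.
by apply: H; lia.
Qed.

Lemma gam2_pos : 0 < gam 2%N.
Proof. by apply: part_pos; lia. Qed.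

Lemma mesh_ge0 : 0 <= mesh m gam.
Proof.
apply: le_trans (le_mesh 1%N ltac:(lia)).
by rewrite subr_ge0; apply/ltW/part_inc; lia.
Qed.

Lemma minphi_ge c x : (forall l, (1 <= l <= m)%N -> c <= phi gam l x) ->
  c <= minphi m gam x.
Proof.
move=> H; rewrite /minphi big_nat_cond.
apply: (big_ind (fun v => c <= v)).
- by apply: H; lia.
- by move=> a b ha hb; rewrite le_min ha hb.
- by move=> l /andP[hl _]; apply: H; lia.
Qed.

Lemma minphi_le1 x : minphi m gam x <= phi gam 1 x.
Proof.
by rewrite /minphi big_ltn; [rewrite ge_min lexx | lia].
Qed.

Lemma coefs_pos l : (1 <= l <= m)%N -> 0 < bcoef gam l /\ 0 < acoef gam l.
Proof.
move=> hl; have [e|ne] := eqVneq l 1%N.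
  rewrite e; split; first by rewrite /bcoef.
  apply: acoef1_gt0; exact: gam2_pos.
have p : 0 < gam l by apply: part_pos; lia.
have q : gam l < gam l.+1 by exact: part_inc.
by split; [exact: bcoef_gt0 | exact: acoef_gt0].
Qed.

Lemma phi_nonneg l x : (1 <= l <= m)%N -> 0 <= x -> 0 <= phi gam l x.
Proof.
move=> hl x0; have [e|ne] := eqVneq l 1%N.
  by rewrite e; apply: phi1_ge0 => //; exact: gam2_pos.
have p : 0 < gam l by apply: part_pos; lia.
have q : gam l < gam l.+1 by exact: part_inc.
exact: phi_ge0.
Qed.

Lemma minphi_below x : 0 < x -> x <= gt ->
  exists l, (1 <= l <= m)%N /\ phi gam l x <= log2 (1 + x).
Proof.
move=> x0 xg.
have hx : 0 <= x <= gt by rewrite (ltW x0) xg.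
have [l [hl /andP[h1 h2]]] := find_itv _ hx.
exists l; split => //.
have [e|ne] := eqVneq l 1%N.
  move: h2; rewrite e => h2.
  by apply: phi1_le; [exact: gam2_pos | rewrite ltW].
have p : 0 < gam l by apply: part_pos; lia.
have q : gam l < gam l.+1 by exact: part_inc.
by apply: phi_le_in => //; rewrite h1 h2.
Qed.

Lemma log2_lip x y : 0 <= y -> y <= x -> log2 (1 + x) - log2 (1 + y) <= (x - y) / ln (2 : R).
Proof.
move=> y0 yx.
rewrite /log2 -mulrBl ler_pM2r ?invr_gt0 ?ln2_gt0 //.
have p1 : 0 < 1 + y by lra.
have p2 : 0 < 1 + x by lra.
have := expR_ge1Dx (ln (1 + x) - ln (1 + y)).
rewrite expRD expRN !lnK ?posrE //.
move=> H.
have : ln (1 + x) - ln (1 + y) <= (1 + x) / (1 + y) - 1 by lra.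
move/le_trans; apply.
have -> : (1 + x) / (1 + y) - 1 = (x - y) / (1 + y) by field; apply/eqP; lra.
rewrite ler_pdivrMr //; nra.
Qed.

Lemma sup_bound x : 0 <= x <= gt ->
  log2 (1 + x) - minphi m gam x <= mesh m gam / ln 2.
Proof.
move=> /andP[x0 xg].
have M0 := mesh_ge0.
have ml : 0 <= mesh m gam / ln 2 by rewrite divr_ge0 // ltW // ln2_gt0.
have [e|xn0] := eqVneq x 0.
  rewrite e log2_1 sub0r.
  apply: le_trans ml; rewrite oppr_le0.
  by apply: minphi_ge => l hl; apply: phi_nonneg.
have xp : 0 < x by rewrite lt_neqAle eq_sym xn0 x0.
rewrite lerBlDr -lerBlDl.
apply: minphi_ge => l hl.
have hx0 : 0 <= x <= gt by rewrite x0 xg.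
have [l0 [hl0 /andP[h1 h2]]] := find_itv _ hx0.
have [lt|ge] := ltnP l l0.
  have hx : gam l.+1 <= x by apply: le_trans h1; apply: part_le; lia.
  apply: le_trans (_ : log2 (1 + x) <= _).
    by rewrite lerBlDr lerDl.
  have [e|ne] := eqVneq l 1%N.
    move: hx; rewrite e => hx; apply: phi1_ge => //; exact: gam2_pos.
  have p : 0 < gam l by apply: part_pos; lia.
  have q : gam l < gam l.+1 by exact: part_inc.
  by apply: phi_ge_out => //; right.
have [gt'|eq'] := ltnP l0 l.
  have hx : x <= gam l by apply: le_trans h2 _; apply: part_le; lia.
  apply: le_trans (_ : log2 (1 + x) <= _).
    by rewrite lerBlDr lerDl.
  have ne : l != 1%N by apply/eqP; lia.
  have p : 0 < gam l by apply: part_pos; lia.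
  have q : gam l < gam l.+1 by exact: part_inc.
  by apply: phi_ge_out => //; left.
have el : l = l0 by lia.
subst l0.
have Hm := le_mesh _ hl.
have gl0 : 0 <= gam l by case: hp => [g1 _]; rewrite -g1; apply: part_le; lia.
have L := log2_lip _ _ gl0 h1.
have L2 : (x - gam l) / ln 2 <= mesh m gam / ln 2.
  by rewrite ler_pM2r ?invr_gt0 ?ln2_gt0 //; lra.
have [e|ne] := eqVneq l 1%N.
  subst l.
  have ph := phi1_ge0 _ gam2_pos _ x0.
  move: L L2; case: hp => [g1 _]; rewrite g1 log2_1 subr0 => L L2.
  lra.
have p : 0 < gam l by apply: part_pos; lia.
have q : gam l < gam l.+1 by exact: part_inc.
have := @phi_ge_left _ _ ne p q _ h1.
lra.
Qed.

End Part.

Lemma SINR_gt0 (n N : nat) (sigma2 : R) (g : 'I_n -> 'I_N -> R) q i j :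
  0 < sigma2 -> (forall i j, 0 < g i j) -> 0 < SINR sigma2 g q i j.
Proof.
move=> s0 g0; rewrite /SINR divr_gt0 ?mulr_gt0 ?expR_gt0 //.
have : 0 <= \sum_(k < N | k != j) expR (q k) * g i k.
  by apply: sumr_ge0 => k _; apply/ltW/mulr_gt0; [exact: expR_gt0 | exact: g0].
lra.
Qed.

Lemma fhat_eq (n N : nat) (sigma2 : R) (g : 'I_n -> 'I_N -> R) gam l i j q u :
  0 < sigma2 -> (forall i j, 0 < g i j) ->
  fhat sigma2 g gam l i j q u = - (u i j / bcoef gam l) - ln (SINR sigma2 g q i j).
Proof.
move=> s0 g0.
have S0 := @SINR_gt0 n N sigma2 g q i j s0 g0.
set b := bcoef gam l.
have gp := g0 i j.
have eq0 := expR_gt0 (q j).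
rewrite /fhat -/b.
have -> : sigma2 / g i j * expR (- q j - u i j / b) +
  \sum_(k < N | k != j) g i k / g i j * expR (q k - q j - u i j / b)
  = expR (- (u i j / b)) * (SINR sigma2 g q i j)^-1.
  rewrite /SINR invf_div.
  have -> : \sum_(k < N | k != j) g i k / g i j * expR (q k - q j - u i j / b)
     = expR (- (u i j / b)) / (expR (q j) * g i j) * \sum_(k < N | k != j) expR (q k) * g i k.
    rewrite mulr_sumr; apply: eq_bigr => k _.
    rewrite !expRD expRN; field; apply/andP; split; apply/eqP; lra.
  rewrite !expRD expRN; field; apply/andP; split; apply/eqP; lra.
rewrite lnM ?posrE ?expR_gt0 ?invr_gt0 // expRK lnV ?posrE //.
Qed.

End Aux.

Theorem theorem1 (R : realType) (n N m : nat) (sigma2 : R)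
  (B : 'I_N -> R) (g : 'I_n -> 'I_N -> R) (t : 'I_n -> R)
  (gt : R) (gam : nat -> R) :
  (1 <= n)%N -> (1 <= N)%N -> (1 <= m)%N ->
  0 < sigma2 ->
  (forall j, 0 < B j) ->
  (forall i j, 0 < g i j) ->
  (forall i, 0 < t i) ->
  0 < gt ->
  is_partition gt m gam ->
  (* (i) convexity *)
  (forall l, (1 <= l <= m)%N -> forall i j,
     convex_qu (fun q u => fhat sigma2 g gam l i j q u))
  /\
  (* (ii) conservative approximation of the throughput constraint *)
  (forall (M : R) (zbar : 'I_n -> 'I_N -> bool)
          (q : 'I_N -> R) (u : 'I_n -> 'I_N -> R),
     0 < M ->
     (forall i, (\sum_(j < N) (zbar i j : nat))%N = N.-1) ->
     (forall i j, SINR sigma2 g q i j <= gt) ->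
     (forall l, (1 <= l <= m)%N -> forall i j,
        fhat sigma2 g gam l i j q u
        <= ln (B j * acoef gam l / t i) / bcoef gam l + M * (zbar i j)%:R) ->
     forall i,
       t i <= \sum_(j < N) expR (u i j) * B j * log2 (1 + SINR sigma2 g q i j)
                           * (1 - (zbar i j)%:R))
  /\
  (* (iii) vanishing conservatism under refinement *)
  (forall (ms : nat -> nat) (gams : nat -> nat -> R),
     (forall k, (1 <= ms k)%N) ->
     (forall k, is_partition gt (ms k) (gams k)) ->
     (fun k => mesh (ms k) (gams k)) @ \oo --> (0 : R) ->
     let S k := [set log2 (1 + x) - minphi (ms k) (gams k) x | x in `[0, gt]] in
     (forall k, has_sup (S k)) /\
     (fun k => sup (S k)) @ \oo --> (0 : R)).
Proof.
move=> hn hN hm s0 B0 g0 t0 gt0 hp.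
split; [|split].
- move=> l hl i j q1 q2 u1 u2 th ht /=.
  rewrite /fhat /=.
  set b := bcoef gam l.
  have e0 : forall y1 y2 z1 z2 : R, - (th * y1 + (1 - th) * y2) - (th * z1 + (1 - th) * z2) / b
     = th * (- y1 - z1 / b) + (1 - th) * (- y2 - z2 / b) by move=> *; ring.
  have e1 : forall x1 x2 y1 y2 z1 z2 : R,
     (th * x1 + (1 - th) * x2) - (th * y1 + (1 - th) * y2) - (th * z1 + (1 - th) * z2) / b
     = th * (x1 - y1 - z1 / b) + (1 - th) * (x2 - y2 - z2 / b) by move=> *; ring.
  rewrite e0; under eq_bigr => k _ do rewrite e1.
  apply: lse_conv => //; first exact: divr_gt0.
  by move=> k; exact: divr_gt0.
- move=> M zbar q u M0 hz hS hf i.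
  have [j0 hj0] : exists j0, zbar i j0 = false.
    case: (boolP [exists j, ~~ zbar i j]) => [/existsP [j0 /negbTE h] | /existsPn H].
      by exists j0.
    exfalso; move: (hz i).
    under eq_bigr => j _ do rewrite (negbNE (H j)).
    rewrite sum1_card card_ord; lia.
  set S := SINR sigma2 g q i j0.
  have S0 : 0 < S := @SINR_gt0 R n N sigma2 g q i j0 s0 g0.
  have [l [hl hphi]] := @minphi_below R gt m gam hp hm S S0 (hS i j0).
  have [hb ha] := @coefs_pos R gt m gam hp hm l hl.
  have H := hf l hl i j0.
  rewrite hj0 mulr0 addr0 (@fhat_eq R n N sigma2 g gam l i j0 q u s0 g0) -/S in H.
  set b := bcoef gam l in H hb.
  set a := acoef gam l in H ha.
  have H2 : - u i j0 - b * ln S <= ln (B j0 * a / t i).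
    have := ler_wpM2l (ltW hb) H.
    have -> : b * (- (u i j0 / b) - ln S) = - u i j0 - b * ln S.
      by field; apply/eqP; lra.
    have -> : b * (ln (B j0 * a / t i) / b) = ln (B j0 * a / t i).
      by field; apply/eqP; lra.
    by [].
  have Hp : B j0 * a / t i \in Num.pos.
    by rewrite posrE divr_gt0 ?mulr_gt0.
  have H3 : expR (- u i j0 - b * ln S) <= B j0 * a / t i.
    by rewrite -[X in _ <= X](lnK Hp) ler_expR.
  rewrite ler_pdivlMr // in H3.
  have key : t i <= expR (u i j0) * B j0 * phi gam l S.
    set w := - u i j0 - b * ln S in H3.
    have -> : t i = t i * expR w * expR (- w).
      by rewrite -mulrA -expRD subrr expR0 mulr1.
    apply: le_trans (ler_wpM2r (ltW (expR_gt0 _)) (_ : t i * expR w <= B j0 * a)) _.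
      by rewrite mulrC.
    have -> : - w = u i j0 + b * ln S by rewrite /w; ring.
    rewrite /phi -/a -/b /powR gt_eqF // expRD.
    have -> : B j0 * a * (expR (u i j0) * expR (b * ln S))
       = expR (u i j0) * B j0 * (a * expR (b * ln S)) by ring.
    by [].
  rewrite (bigD1 j0) //= hj0 subr0 mulr1.
  apply: le_trans (_ : expR (u i j0) * B j0 * log2 (1 + S) <= _).
    apply: le_trans key _; apply: ler_wpM2l => //.
    by apply: mulr_ge0; [exact/ltW/expR_gt0 | exact/ltW/B0].
  rewrite lerDl; apply: sumr_ge0 => j _.
  apply: mulr_ge0; last by case: (zbar i j); rewrite /= ?subrr ?subr0.
  apply: mulr_ge0; first by apply: mulr_ge0; [exact/ltW/expR_gt0 | exact/ltW/B0].
  by apply/ltW/log2_gt0/SINR_gt0.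
- move=> ms gams hms hps hmesh S.
  have bnd k x : 0 <= x <= gt ->
      log2 (1 + x) - minphi (ms k) (gams k) x <= mesh (ms k) (gams k) / ln 2.
    exact: (@sup_bound R gt (ms k) (gams k) (hps k) (hms k) x).
  have zero k : 0 <= log2 (1 + 0) - minphi (ms k) (gams k) 0.
    rewrite log2_1 sub0r oppr_ge0.
    apply: le_trans (@minphi_le1 R (ms k) (gams k) (hms k) 0) _.
    by rewrite /phi /bcoef /= powR0 ?mulr0 ?oner_neq0.
  have mem0 : 0 \in `[0, gt] by rewrite in_itv /= lexx ltW.
  have hasS k : has_sup (S k).
    split.
      by exists (log2 (1 + 0) - minphi (ms k) (gams k) 0); exists 0.
    exists (mesh (ms k) (gams k) / ln 2) => _ [x hx <-]; apply: bnd.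
    by move: hx; rewrite /= in_itv.
  split => //.
  apply: (@squeeze_cvgr _ _ _ _ (fun _ => 0) (fun k => mesh (ms k) (gams k) / ln 2)).
  - apply: nearW => k; apply/andP; split.
      apply: le_trans (zero k) _.
      apply: (sup_upper_bound (hasS k)).
      by exists 0.
    apply: ge_sup; first exact: (hasS k).1.
    move=> _ [x hx <-]; apply: bnd.
    by move: hx; rewrite /= in_itv.
  - exact: cvg_cst.
  - rewrite -(mul0r (ln (2 : R))^-1).
    apply: cvgMr_tmp; exact: hmesh.
Qed.
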